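(* If $H$ is an $\operatorname{IR}$-graph of diameter $2$, then $H$ has an induced $C_4$.
   Context: All graphs are finite and simple. For $G=(V,E)$, $D\subseteq V$, $v\in D$: $\operatorname{PN}(v,D)=N[v]-N[D-\{v\}]$ (closed neighbourhoods). $D$ is irredundant if $\operatorname{PN}(v,D)\neq\varnothing$ for all $v\in D$; $\operatorname{IR}(G)$ is the maximum size of an irredundant set; an $\operatorname{IR}(G)$-set is an irredundant set of that size. $G(\operatorname{IR})$ has the $\operatorname{IR}(G)$-sets as vertices, with $D\sim D'$ iff there exist $u\in D$, $v\in D'$ with $uv\in E(G)$ and $D'=(D-\{u\})\cup\{v\}$. A graph $H$ is an $\operatorname{IR}$-graph if $H\cong G(\operatorname{IR})$ for some graph $G$. *)

(* Defs.v *)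
From mathcomp Require Import all_boot.
Set Implicit Arguments. Unset Strict Implicit. Unset Printing Implicit Defensive.

Definition simple_graph (T : finType) (e : rel T) : Prop :=
  symmetric e /\ irreflexive e.

Section IR.
Variables (T : finType) (e : rel T).

Definition cnbhd (v : T) : {set T} := v |: [set u | e v u].
Definition cnbhdS (S : {set T}) : {set T} := \bigcup_(u in S) cnbhd u.
Definition pn (v : T) (D : {set T}) : {set T} := cnbhd v :\: cnbhdS (D :\ v).

Definition irredundant (D : {set T}) : bool :=
  [forall v in D, pn v D != set0].

Definition IR : nat := \max_(D : {set T} | irredundant D) #|D|.

Definition IRset (D : {set T}) : bool := irredundant D && (#|D| == IR).

Definition IRadj (D D' : {set T}) : Prop :=
  exists u v, [/\ u \in D, v \in D', e u v & D' = (D :\ u) :|: [set v]].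
End IR.

Definition iso_to_GIR (V : finType) (h : rel V) (T : finType) (e : rel T) : Prop :=
  exists f : V -> {set T},
    [/\ injective f,
        (forall x, IRset e (f x)),
        (forall D, IRset e D -> exists x, f x = D) &
        (forall x y, h x y <-> IRadj e (f x) (f y))].

(* H is an IR-graph: H is isomorphic to G(IR) for some finite simple graph G
   (w.l.o.g. on vertex set 'I_n). *)
Definition IR_graph (V : finType) (h : rel V) : Prop :=
  exists (n : nat) (e : rel 'I_n), simple_graph e /\ iso_to_GIR h e.

Definition diameter2 (V : finType) (h : rel V) : Prop :=
  (forall x y, x = y \/ h x y \/ exists z, h x z && h z y) /\
  (exists x y, x != y /\ ~~ h x y).

Definition has_induced_C4 (V : finType) (h : rel V) : Prop :=
  exists a b c d : V,
    [/\ uniq [:: a; b; c; d],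
        [&& h a b, h b c, h c d & h d a] &
        ~~ h a c && ~~ h b d].

(* Main.v *)
Require Import Defs.
From mathcomp Require Import all_boot.
Set Implicit Arguments. Unset Strict Implicit. Unset Printing Implicit Defensive.

Section L.
Variables (T : finType) (e : rel T).
Hypotheses (esym : symmetric e) (eirr : irreflexive e).

Lemma in_cn x y : (y \in cnbhd e x) = (y == x) || e x y.
Proof. by rewrite /cnbhd !inE. Qed.

Lemma notin_cnS y S : y \notin cnbhdS e S <-> (forall z, z \in S -> (y != z) && ~~ e z y).
Proof.
split.
- move=> H z zS; apply/negP => /negP; rewrite negb_and !negbK => H2.
  move/negP: H; apply; apply/bigcupP; exists z => //; rewrite in_cn.
  by case/orP: H2 => [->|->] //; rewrite orbT.
- move=> H; apply/negP => /bigcupP [z zS]; rewrite in_cn => H2.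
  by move/andP: (H z zS) => [/negP a /negP b]; case/orP: H2.
Qed.

Lemma in_pn y x D : (y \in pn e x D) = (y \in cnbhd e x) && (y \notin cnbhdS e (D :\ x)).
Proof. by rewrite /pn inE andbC. Qed.

Definition indep (Q : {set T}) := forall y z, y \in Q -> z \in Q -> y != z -> ~~ e y z.

Lemma indep_irr Q : indep Q -> irredundant e Q.
Proof.
move=> H; apply/forallP => y; apply/implyP => yQ; apply/set0Pn; exists y.
rewrite in_pn in_cn eqxx /=; apply/notin_cnS => z; rewrite !inE => /andP [zy zQ].
by rewrite eq_sym zy /= H.
Qed.

Lemma irr_le Q : irredundant e Q -> #|Q| <= IR e.
Proof. by move=> H; rewrite /IR; apply: (@leq_bigmax_cond _ (fun D => irredundant e D) (fun D => #|D|)). Qed.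

Definition Sx (D : {set T}) := [set x in D | pn e x D :\ x != set0].

Lemma notS_self (D : {set T}) b : irredundant e D -> b \in D -> b \notin Sx D -> b \in pn e b D.
Proof.
move=> irrD bD bS.
have : pn e b D != set0 by move/forallP: irrD => /(_ b); rewrite bD.
case/set0Pn => y yP.
move: bS; rewrite inE bD /= negbK => /eqP E.
case: (eqVneq y b) => [E2|yb]; first by move: yP; rewrite E2.
have : y \in pn e b D :\ b by rewrite in_setD1 yb yP.
by rewrite E inE.
Qed.

Lemma notS_prop (D : {set T}) b z : irredundant e D -> b \in D -> b \notin Sx D -> z \in D -> z != b ->
  (b != z) && ~~ e z b.
Proof.
move=> irrD bD bS zD zb; have := notS_self irrD bD bS.
rewrite in_pn => /andP [_ /notin_cnS H]; apply: H; by rewrite !inE zb.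
Qed.

Lemma pn_e (D : {set T}) x p : p \in pn e x D -> p != x -> e x p.
Proof. by rewrite in_pn in_cn => /andP [H1 _] px; move: H1; rewrite (negbTE px). Qed.

Lemma pn_out (D : {set T}) x p z : p \in pn e x D -> z \in D -> z != x ->
  (p != z) && ~~ e z p.
Proof.
rewrite in_pn => /andP [_ /notin_cnS H2] zD zx.
by apply: H2; rewrite !inE zx zD.
Qed.

Definition pf (D : {set T}) x := odflt x [pick y in pn e x D :\ x].

Lemma pf_S (D : {set T}) x : x \in Sx D -> (pf D x \in pn e x D) && (pf D x != x).
Proof.
rewrite inE => /andP [_ /set0Pn [y yP]]; rewrite /pf.
case: pickP => [z /=|H]; first by rewrite !inE => /andP [-> ->].
by move: (H y); rewrite yP.
Qed.

Lemma pf_notS (D : {set T}) x : x \in D -> x \notin Sx D -> pf D x = x.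
Proof.
move=> xD; rewrite inE xD /= negbK => /eqP E; rewrite /pf.
by case: pickP => [z|//]; rewrite E inE.
Qed.

Lemma keyK (D : {set T}) x y : irredundant e D -> x \in D -> y \in D ->
  (x \in cnbhd e (pf D y)) = (x == y).
Proof.
move=> irrD xD yD.
case: (boolP (y \in Sx D)) => yS.
- move/andP: (pf_S yS) => [H1 H2].
  case: (eqVneq x y) => [->|xy].
  + by rewrite in_cn esym (pn_e H1 H2) orbT.
  + have /andP [a b] := pn_out H1 xD xy.
    by rewrite in_cn esym (negbTE b) orbF eq_sym (negbTE a).
- rewrite (pf_notS yD yS); case: (eqVneq x y) => [->|xy]; first by rewrite in_cn eqxx.
  have /andP [a b] := notS_prop irrD yD yS xD xy.
  by rewrite in_cn (negbTE xy) /= esym (negbTE b).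
Qed.
Lemma pf_inj (D : {set T}) : irredundant e D -> {in D &, injective (pf D)}.
Proof.
move=> irrD x y xD yD E; apply/eqP; rewrite -(keyK irrD xD yD) -E.
by rewrite (keyK irrD xD xD).
Qed.

Lemma swap_irr (D : {set T}) : irredundant e D -> irredundant e (pf D @: D).
Proof.
move=> irrD; apply/forallP => w; apply/implyP => /imsetP [y yD ->].
apply/set0Pn; exists y; rewrite in_pn (keyK irrD yD yD) eqxx /=.
apply/notin_cnS => z; rewrite in_setD1 => /andP [zw /imsetP [y' y'D zE]].
move: zw; rewrite zE => zw.
have yy : y != y' by apply: contraNneq zw => ->.
have := keyK irrD yD y'D; rewrite in_cn (negbTE yy) => /norP [a b].
by rewrite a b.
Qed.

Lemma swap_card (D : {set T}) : irredundant e D -> #|pf D @: D| = #|D|.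
Proof. by move=> irrD; rewrite card_in_imset //; apply: pf_inj. Qed.

Lemma swap_notin (D : {set T}) x : irredundant e D -> x \in Sx D -> x \notin pf D @: D.
Proof.
move=> irrD xS; have xD : x \in D by move: xS; rewrite inE => /andP [].
apply/imsetP => [[y yD E]].
have := keyK irrD xD yD; rewrite -E in_cn eqxx /= => H; have /eqP xy : x == y by rewrite -H.
subst y; by move/andP: (pf_S xS) => [_]; rewrite -E eqxx.
Qed.

Lemma adj_no2 (D D' : {set T}) y1 y2 : IRadj e D D' -> y1 \in D -> y2 \in D -> y1 != y2 ->
  y1 \notin D' -> y2 \notin D' -> False.
Proof.
move=> [u [v [uD vD' euv ->]]] y1D y2D y12.
rewrite !inE !negb_or y1D y2D !andbT !negbK => /andP [/eqP E1 _] /andP [/eqP E2 _].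
by rewrite E1 E2 eqxx in y12.
Qed.

Lemma adj_no3 (D Z P : {set T}) y1 y2 y3 : IRadj e D Z -> IRadj e Z P ->
  y1 \in D -> y2 \in D -> y3 \in D -> y1 != y2 -> y2 != y3 -> y3 != y1 ->
  y1 \notin P -> y2 \notin P -> y3 \notin P -> False.
Proof.
move=> [u [v [uD vZ euv EZ]]] [u' [v' [uZ vP euv' EP]]] y1D y2D y3D y12 y23 y31.
have H : forall y, y \in D -> y != u -> y != u' -> y \in P.
  by move=> y yD yu yu'; rewrite EP EZ !inE yu yu' yD.
have K : forall y, y \in D -> y \notin P -> (y == u) || (y == u').
  move=> y yD yP; apply/negPn/negP; rewrite negb_or => /andP [a b].
  by move/negP: yP; apply; apply: H.
move=> /(K _ y1D) /orP [] /eqP E1 /(K _ y2D) /orP [] /eqP E2 /(K _ y3D) /orP [] /eqP E3;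
  subst; by move: y12 y23 y31; rewrite ?eqxx.
Qed.

Lemma S_sub (D : {set T}) x : x \in Sx D -> x \in D.
Proof. by rewrite inE => /andP []. Qed.

Lemma pf_notin (D : {set T}) x : x \in Sx D -> pf D x \notin D.
Proof.
move=> xS; move/andP: (pf_S xS) => [H1 H2]; apply/negP => pD.
by have := pn_out H1 pD H2; rewrite eqxx.
Qed.

Lemma card_swap1 (D : {set T}) u v : u \in D -> v \notin D -> #|D :\ u :|: [set v]| = #|D|.
Proof.
move=> uD vD; rewrite setUC cardsU1 in_setD1 (negbTE vD) andbF (cardsD1 u D) uD //.
Qed.

Lemma S_of_adj (D : {set T}) x z : irredundant e D -> x \in D -> z \in D -> z != x -> e z x ->
  x \in Sx D.
Proof.
move=> irrD xD zD zx ezx; rewrite inE xD /=.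
have : pn e x D != set0 by move/forallP: irrD => /(_ x); rewrite xD.
case/set0Pn => y yP; apply/set0Pn; exists y; rewrite in_setD1 yP andbT.
apply/eqP => E; subst y; move: yP; rewrite in_pn => /andP [_ /notin_cnS H].
by have := H z; rewrite in_setD1 zx zD ezx andbF => /(_ isT).
Qed.

Lemma edge_pn (D D' : {set T}) u v : IRset e D -> IRset e D' -> D' = D :\ u :|: [set v] ->
  u \in D -> e u v -> #|Sx D'| <= 1 -> v \in pn e u D.
Proof.
move=> /andP [irrD /eqP cD] /andP [irrD' /eqP cD'] E uD euv S1.
have vu : v != u by apply: contraTneq euv => ->; rewrite eirr.
have vD : v \notin D.
  apply/negP => vD; move: cD'; rewrite E -cD.
  have -> : D :\ u :|: [set v] = D :\ u.
    apply/setP => w; rewrite !inE; case: (eqVneq w v) => [->|wv]; first by rewrite vu vD.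
    by rewrite orbF.
  by rewrite (cardsD1 u D) uD; exact: n_Sn.
rewrite in_pn in_cn euv orbT /=; apply/negP => /bigcupP [w].
rewrite in_setD1 => /andP [wu wD]; rewrite in_cn => /orP [/eqP vw|ewv].
  by move: vD; rewrite vw wD.
have vD' : v \in D' by rewrite E !inE eqxx orbT.
have wD' : w \in D' by rewrite E !inE wu wD.
have wv : w != v by apply: contraNneq vD => <-.
have := S_of_adj irrD' vD' wD' wv ewv.
have vw : v != w by rewrite eq_sym.
have := S_of_adj irrD' wD' vD' vw; rewrite esym => /(_ ewv) wS vS.
by move: S1; rewrite leqNgt => /negP; apply; apply/card_gt1P; exists v, w.
Qed.

Lemma pn_notin (D : {set T}) x p : p \in pn e x D -> p != x -> p \notin D.
Proof. by move=> H1 H2; apply/negP => pD; have := pn_out H1 pD H2; rewrite eqxx. Qed.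

Lemma final_contra (Z : {set T}) s v1 v2 : IRset e Z -> s \in Sx Z -> #|Sx Z| <= 1 ->
  v1 \in pn e s Z -> v1 != s -> v2 \in pn e s Z -> v2 != s -> v1 != v2 -> ~~ e v1 v2 -> False.
Proof.
move=> /andP [irrZ /eqP cardZ] sS S1 p1 n1 p2 n2 v12 ne12.
have sZ := S_sub sS.
have notS : forall c, c \in Z -> c != s -> c \notin Sx Z.
  move=> c cZ cs; apply/negP => cS; move: S1; rewrite leqNgt => /negP; apply.
  by apply/card_gt1P; exists c, s.
have v1Z := pn_notin p1 n1; have v2Z := pn_notin p2 n2.
pose Q := v2 |: (v1 |: (Z :\ s)).
have cQ : #|Q| = #|Z|.+1.
  rewrite /Q !cardsU1 !inE (negbTE v1Z) (eq_sym v2) (negbTE v12) (negbTE v2Z) !andbF /=.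
  by rewrite (cardsD1 s Z) sZ.
have hc : forall c t, c \in Z :\ s -> t \in Q -> t != c -> ~~ e t c.
  move=> c t; rewrite in_setD1 => /andP [cs cZ]; rewrite /Q !inE => /orP [/eqP ->|/orP [/eqP ->|/andP [ts tZ]]] tc.
  - by rewrite esym; have /andP [_ ->] := pn_out p2 cZ cs.
  - by rewrite esym; have /andP [_ ->] := pn_out p1 cZ cs.
  - by have /andP [_ ->] := notS_prop irrZ cZ (notS c cZ cs) tZ tc.
have iQ : indep Q.
  move=> y z yQ zQ yz.
  case: (boolP (y \in Z :\ s)) => yZ; first by rewrite esym; apply: hc => //; rewrite eq_sym.
  case: (boolP (z \in Z :\ s)) => zZ; first by apply: hc.
  move: yQ zQ yz; rewrite /Q !inE.
  move: yZ zZ; rewrite !inE => /negbTE -> /negbTE ->; rewrite !orbF.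
  by case/orP => /eqP -> /orP [] /eqP ->; rewrite ?eqxx // esym.
have := irr_le (indep_irr iQ); by rewrite cQ -cardZ ltnn.
Qed.

Section C4.
Variables (D : {set T}) (x y : T).
Hypotheses (irrD : irredundant e D) (SD : Sx D = [set x; y]) (xy : x != y).

Let xS : x \in Sx D. Proof. by rewrite SD !inE eqxx. Qed.
Let yS : y \in Sx D. Proof. by rewrite SD !inE eqxx orbT. Qed.
Let xD : x \in D. Proof. exact: S_sub xS. Qed.
Let yD : y \in D. Proof. exact: S_sub yS. Qed.
Let notS z : z \in D -> z != x -> z != y -> z \notin Sx D.
Proof. by move=> _ zx zy; rewrite SD !inE negb_or zx zy. Qed.

Lemma hp1D : (pf D x \in D) = false.
Proof. by move/andP: (pf_S xS) => [a b]; apply/negbTE/(pn_notin a b). Qed.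
Lemma hp2D : (pf D y \in D) = false.
Proof. by move/andP: (pf_S yS) => [a b]; apply/negbTE/(pn_notin a b). Qed.
Lemma hp12 : (pf D x == pf D y) = false.
Proof. by apply/negbTE; apply: contra xy => /eqP /(pf_inj irrD xD yD) ->. Qed.
Lemma hp21 : (pf D y == pf D x) = false. Proof. by rewrite eq_sym hp12. Qed.
Lemma hneq (a : T) b : a \in D -> (b \in D) = false -> ((a == b) = false) * ((b == a) = false).
Proof. move=> aD bD; have h : (a == b) = false by apply/negbTE; apply: contraFneq bD => <-. by split; rewrite ?h // eq_sym h. Qed.
Lemma hxy : (x == y) = false. Proof. exact: negbTE. Qed.
Lemma hyx : (y == x) = false. Proof. by rewrite eq_sym hxy. Qed.

Lemma P_mem w : (w \in pf D @: D) =
  (w == pf D x) || (w == pf D y) || ((w != x) && (w != y) && (w \in D)).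
Proof.
apply/idP/idP.
- case/imsetP => z zD ->.
  case: (eqVneq z x) => [->|zx]; first by rewrite eqxx.
  case: (eqVneq z y) => [->|zy]; first by rewrite eqxx orbT.
  by rewrite (pf_notS zD (notS zD zx zy)) zx zy zD !orbT.
- case/orP => [/orP [] /eqP ->|/andP [/andP [wx wy] wD]]; try exact: imset_f.
  by rewrite -(pf_notS wD (notS wD wx wy)); apply: imset_f.
Qed.

Lemma W_indep : indep (D :\ x :|: [set pf D x]).
Proof.
move/andP: (pf_S xS) => [p1 n1].
move=> a b; rewrite !inE => /orP [/andP [ax aD]|/eqP ->] /orP [/andP [bx bD]|/eqP ->] ab.
- case: (eqVneq a y) => [ay|ay].
  + have by' : b != y by rewrite -ay eq_sym.
    by have /andP [_ ->] := notS_prop irrD bD (notS bD bx by') aD ab.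
  + have ba : b != a by rewrite eq_sym.
    by rewrite esym; have /andP [_ ->] := notS_prop irrD aD (notS aD ax ay) bD ba.
- by have /andP [_ ->] := pn_out p1 aD ax.
- by rewrite esym; have /andP [_ ->] := pn_out p1 bD bx.
- by rewrite eqxx in ab.
Qed.

Ltac solve_set :=
  let w := fresh "w" in
  apply/setP => w; rewrite !inE ?P_mem ?inE;
  case: (eqVneq w (pf D x)) => [->|?];
  [ rewrite ?eqxx ?hp1D ?hp12 ?hp21 ?(hneq xD hp1D) ?(hneq yD hp1D) ?(hneq xD hp2D) ?(hneq yD hp2D) ?hxy ?hyx ?xD ?yD //= ?orbT ?andbT ?orbF ?andbF //
  | case: (eqVneq w (pf D y)) => [->|?];
  [ rewrite ?eqxx ?hp2D ?hp12 ?hp21 ?(hneq xD hp1D) ?(hneq yD hp1D) ?(hneq xD hp2D) ?(hneq yD hp2D) ?hxy ?hyx ?xD ?yD //= ?orbT ?andbT ?orbF ?andbF //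
  | case: (eqVneq w x) => [->|?];
  [ rewrite ?eqxx ?hp1D ?hp2D ?hp12 ?hp21 ?(hneq xD hp1D) ?(hneq yD hp1D) ?(hneq xD hp2D) ?(hneq yD hp2D) ?hxy ?hyx ?xD ?yD //= ?orbT ?andbT ?orbF ?andbF //
  | case: (eqVneq w y) => [->|?];
  [ rewrite ?eqxx ?hp1D ?hp2D ?hp12 ?hp21 ?(hneq xD hp1D) ?(hneq yD hp1D) ?(hneq xD hp2D) ?(hneq yD hp2D) ?hxy ?hyx ?xD ?yD //= ?orbT ?andbT ?orbF ?andbF //
  | rewrite /= ?orbF ?andbT //]]]].

Lemma E1 : pf D @: D = (D :\ x :|: [set pf D x]) :\ y :|: [set pf D y].
Proof. solve_set. Qed.
Lemma E2 : D :\ y :|: [set pf D y] = (pf D @: D) :\ pf D x :|: [set x].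
Proof. solve_set. Qed.
Lemma E3 : D = (D :\ y :|: [set pf D y]) :\ pf D y :|: [set y].
Proof. solve_set. Qed.
End C4.
End L.

Unset Implicit Arguments.

Theorem proposition4p6 (V : finType) (h : rel V) :
  simple_graph h -> IR_graph h -> diameter2 h -> has_induced_C4 h.
Proof.
move=> [hsym hirr] [n [e [[esym eirr] [f [finj fIR fsurj fh]]]]] [dd [x0 [y0 [nxy nh]]]].
case: (boolP [exists a, 1 < #|Sx e (f a)|]) => [/existsP [a Sa]|/existsPn S1].
- have /andP [irrD /eqP cD] := fIR a.
  have [gt2|le2] := ltnP 2 #|Sx e (f a)|.
  + exfalso; case/card_gt2P: gt2 => [x1 [x2 [x3 [[x1S x2S x3S] [n12 n23 n31]]]]].
    have PIR : IRset e (pf e (f a) @: f a).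
      by rewrite /IRset swap_irr // swap_card // cD eqxx.
    have [b fb] := fsurj _ PIR.
    have m1 := swap_notin esym irrD x1S; have m2 := swap_notin esym irrD x2S.
    have m3 := swap_notin esym irrD x3S.
    have d1 := S_sub x1S; have d2 := S_sub x2S; have d3 := S_sub x3S.
    case: (dd a b) => [ab|[hab|[z /andP [haz hzb]]]].
    * by move: m1; rewrite -fb -ab d1.
    * by move/fh: hab; rewrite fb => adj; apply: (adj_no2 adj d1 d2 n12 m1 m2).
    * have adj1 := (fh _ _).1 haz; have := (fh _ _).1 hzb; rewrite fb => adj2.
      exact: (adj_no3 adj1 adj2 d1 d2 d3 n12 n23 n31 m1 m2 m3).
  + have c2 : #|Sx e (f a)| == 2 by rewrite eqn_leq le2 Sa.
    case/cards2P: c2 => [x [y [xy SD]]].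
    have SD' : Sx e (f a) = [set y; x] by rewrite SD setUC.
    have xS : x \in Sx e (f a) by rewrite SD !inE eqxx.
    have yS : y \in Sx e (f a) by rewrite SD !inE eqxx orbT.
    have xD := S_sub xS; have yD := S_sub yS.
    move/andP: (pf_S xS) => [pp1 np1]; move/andP: (pf_S yS) => [pp2 np2].
    have p1D := pn_notin pp1 np1; have p2D := pn_notin pp2 np2.
    have W1IR : IRset e (f a :\ x :|: [set pf e (f a) x]).
      by rewrite /IRset (indep_irr (W_indep esym irrD SD)) card_swap1 // cD eqxx.
    have W2IR : IRset e (f a :\ y :|: [set pf e (f a) y]).
      by rewrite /IRset (indep_irr (W_indep esym irrD SD')) card_swap1 // cD eqxx.
    have PIR : IRset e (pf e (f a) @: f a).
      by rewrite /IRset swap_irr // swap_card // cD eqxx.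
    have [b fb] := fsurj _ W1IR; have [c fc] := fsurj _ PIR; have [d fd] := fsurj _ W2IR.
    have xP := swap_notin esym irrD xS; have yP := swap_notin esym irrD yS.
    have p12 := hp12 esym irrD SD xy.
    have sneq : forall (A B : {set 'I_n}) t, t \in A -> t \notin B -> A != B.
      by move=> A B t tA; apply: contra => /eqP <-.
    have neq : forall u v, f u != f v -> u != v by move=> u v; apply: contraNneq => ->.
    have y1 : y \in f a :\ x :|: [set pf e (f a) x] by rewrite !inE eq_sym xy yD.
    have x2 : x \in f a :\ y :|: [set pf e (f a) y] by rewrite !inE xy xD.
    have q1 : pf e (f a) x \in f a :\ x :|: [set pf e (f a) x] by rewrite !inE eqxx orbT.
    have q2 : pf e (f a) y \in f a :\ y :|: [set pf e (f a) y] by rewrite !inE eqxx orbT.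
    have q1' : pf e (f a) x \notin f a :\ y :|: [set pf e (f a) y] by rewrite !inE p12 (negbTE p1D) andbF.
    have y2 : y \notin f a :\ y :|: [set pf e (f a) y] by rewrite !inE eqxx eq_sym (negbTE np2).
    have p1y : pf e (f a) x != y by apply: contraNneq p1D => ->.
    have hab : h a b.
      apply/fh; rewrite fb; exists x, (pf e (f a) x); split => //; exact: pn_e pp1 np1.
    have hbc : h b c.
      apply/fh; rewrite fb fc; exists y, (pf e (f a) y); split => //; first exact: imset_f.
        exact: pn_e pp2 np2.
      exact: E1.
    have hcd : h c d.
      apply/fh; rewrite fc fd; exists (pf e (f a) x), x; split => //; first exact: imset_f.
        by rewrite esym; exact: pn_e pp1 np1.
      exact: E2.
    have hda : h d a.
      apply/fh; rewrite fd; exists (pf e (f a) y), y; split => //.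
        by rewrite esym; exact: pn_e pp2 np2.
      exact: (E3 esym irrD SD xy).
    have ab : a != b by apply: neq; rewrite fb eq_sym; exact: (sneq _ _ _ q1 p1D).
    have ac : a != c by apply: neq; rewrite fc; exact: (sneq _ _ _ xD xP).
    have ad : a != d by apply: neq; rewrite fd eq_sym; exact: (sneq _ _ _ q2 p2D).
    have bc : b != c by apply: neq; rewrite fb fc; exact: (sneq _ _ _ y1 yP).
    have bd : b != d by apply: neq; rewrite fb fd; exact: (sneq _ _ _ q1 q1').
    have cd : c != d by apply: neq; rewrite fc fd eq_sym; exact: (sneq _ _ _ x2 xP).
    exists a, b, c, d; split; first by rewrite /= !inE !negb_or ab ac ad bc bd cd.
      by rewrite hab hbc hcd hda.
    apply/andP; split; apply/negP => /fh adj.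
      - by move: adj; rewrite fc => adj; apply: (adj_no2 adj xD yD xy xP yP).
      - by move: adj; rewrite fb fd => adj; apply: (adj_no2 adj q1 y1 p1y q1' y2).
- exfalso.
  case: (dd x0 y0) => [E|[hxy|[z /andP [hxz hzy]]]].
  + by rewrite E eqxx in nxy.
  + by rewrite hxy in nh.
  rewrite hsym in hxz.
  have Sle : forall a, #|Sx e (f a)| <= 1 by move=> a; rewrite leqNgt S1.
  case: ((fh _ _).1 hxz) => [u1 [v1 [u1Z v1X e1 EX]]].
  case: ((fh _ _).1 hzy) => [u2 [v2 [u2Z v2Y e2 EY]]].
  have p1 := edge_pn esym eirr (fIR z) (fIR x0) EX u1Z e1 (Sle x0).
  have p2 := edge_pn esym eirr (fIR z) (fIR y0) EY u2Z e2 (Sle y0).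
  have n1 : v1 != u1 by apply: contraTneq e1 => ->; rewrite eirr.
  have n2 : v2 != u2 by apply: contraTneq e2 => ->; rewrite eirr.
  have u1S : u1 \in Sx e (f z).
    by rewrite inE u1Z /=; apply/set0Pn; exists v1; rewrite in_setD1 n1 p1.
  have u2S : u2 \in Sx e (f z).
    by rewrite inE u2Z /=; apply/set0Pn; exists v2; rewrite in_setD1 n2 p2.
  have u12 : u1 = u2.
    apply/eqP; apply/negP => /negP u12; move: (Sle z); rewrite leqNgt => /negP; apply.
    by apply/card_gt1P; exists u1, u2.
  subst u2.
  have v12 : v1 != v2.
    apply: contraNneq nxy => E; apply/eqP; apply: finj; by rewrite EX EY E.
  have v1Z := pn_notin p1 n1.
  have ne12 : ~~ e v1 v2.
    apply/negP => e12; move/negP: nh; apply; apply/fh; exists v1, v2; split => //.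
    rewrite EX EY; apply/setP => w; rewrite !inE.
    case: (eqVneq w v1) => [->|_]; last by rewrite /= orbF.
    by move/negbTE: v1Z => ->; rewrite andbF.
  exact: (final_contra esym (fIR z) u1S (Sle z) p1 n1 p2 n2 v12 ne12).
Qed.
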